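(* Let $f:I\to\mathbb{R}$ and $g:J\to\mathbb{R}$ be smooth functions on open intervals $I,J\subset\mathbb{R}$, and let $S$ be the translation surface $z=f(x)+g(y)$, $(x,y)\in I\times J$. Let $\phi(x,y,z)=\alpha x+\beta y+\gamma z$ with $\alpha,\beta,\gamma\in\mathbb{R}$ not all zero. If $S$ is $\phi$-minimal, then $f$ or $g$ is an affine function (i.e. $f''\equiv0$ or $g''\equiv0$); consequently $S$ is a cylindrical surface whose rulings are parallel to the $xz$-plane or to the $yz$-plane.
   Context: For a smooth oriented surface with unit normal $N$, $H$ is the mean curvature normalized so that $\Delta_S X=2HN$. The $\phi$-mean curvature is $H_\phi=H-\tfrac12\langle N,(\alpha,\beta,\gamma)\rangle$ and $S$ is $\phi$-minimal if $H_\phi\equiv0$. For the graph $z=f(x)+g(y)$ this condition is equivalent to $(1+g'^2)f''+(1+f'^2)g''=(1+f'^2+g'^2)(-\alpha f'-\beta g'+\gamma)$. *)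

(* Defs.v *)
From Stdlib Require Import Reals Lra.
Open Scope R_scope.

Definition is_open_interval (I : R -> Prop) : Prop :=
  (exists x, I x) /\
  (forall x y z, I x -> I z -> x <= y <= z -> I y) /\
  (forall x, I x -> exists e, 0 < e /\ forall y, Rabs (y - x) < e -> I y).

(* [D] is a sequence of successive derivatives of [f] on [I]:
   D 0 = f and (D n)' = D (n+1) at every point of I.
   Existence of such a D is smoothness (C^infinity) of f on I. *)
Definition derivatives_on (I : R -> Prop) (f : R -> R) (D : nat -> R -> R) : Prop :=
  (forall x, D 0%nat x = f x) /\
  (forall (n : nat) x, I x -> derivable_pt_lim (D n) x (D (S n) x)).

Definition smooth_on (I : R -> Prop) (f : R -> R) : Prop :=
  exists D, derivatives_on I f D.

(* Geometry of the graph z = u(x,y) with u(x,y) = f(x) + g(y), at a point where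
   f' = f1, f'' = f2, g' = g1, g'' = g2 (so u_x = f1, u_y = g1, u_xx = f2,
   u_yy = g2, u_xy = 0).  Upward unit normal N = (-u_x, -u_y, 1)/W,
   W = sqrt(1 + u_x^2 + u_y^2); mean curvature normalized by Delta_S X = 2 H N:
   H = ((1+u_y^2) u_xx - 2 u_x u_y u_xy + (1+u_x^2) u_yy) / (2 W^3). *)
Definition tW (f1 g1 : R) : R := sqrt (1 + f1 ^ 2 + g1 ^ 2).

Definition tH (f1 f2 g1 g2 : R) : R :=
  ((1 + g1 ^ 2) * f2 + (1 + f1 ^ 2) * g2) / (2 * tW f1 g1 ^ 3).

Definition tN (f1 g1 : R) : R * R * R :=
  (- f1 / tW f1 g1, - g1 / tW f1 g1, 1 / tW f1 g1).

Definition tHphi (al be ga f1 f2 g1 g2 : R) : R :=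
  let '(n1, n2, n3) := tN f1 g1 in
  tH f1 f2 g1 g2 - / 2 * (al * n1 + be * n2 + ga * n3).

Definition phi_minimal_translation (al be ga : R) (I J : R -> Prop)
  (Df Dg : nat -> R -> R) : Prop :=
  forall x y, I x -> J y ->
    tHphi al be ga (Df 1%nat x) (Df 2%nat x) (Dg 1%nat y) (Dg 2%nat y) = 0.

Definition affine_on (I : R -> Prop) (f : R -> R) : Prop :=
  exists a b, forall x, I x -> f x = a * x + b.

(* Main.v *)
Require Import Defs.
From Stdlib Require Import Reals Lra Psatz Classical.
From Coquelicot Require Import Coquelicot.
Open Scope R_scope.


Lemma const_on (I : R -> Prop) (h : R -> R) :
  is_open_interval I -> (forall x, I x -> derivable_pt_lim h x 0) ->
  forall x y, I x -> I y -> h x = h y.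
Proof.
  intros [_ [Hc _]] Hd.
  assert (K : forall a b, I a -> I b -> a < b -> h a = h b).
  { intros a b Ha Hb Hab. apply eq_is_derive; [|exact Hab].
    intros t Ht. apply is_derive_Reals. apply Hd. apply (Hc a t b); auto. }
  intros x y Hx Hy. destruct (Rtotal_order x y) as [H|[H|H]].
  - auto.
  - subst; auto.
  - symmetry; auto.
Qed.

Lemma key_rel al be ga p A q B :
  tHphi al be ga p A q B = 0 ->
  al * p ^ 3 + be * q ^ 3 + ga = (1 + q^2) * (ga - al*p - A) + (1 + p^2) * (ga - be*q - B).
Proof.
  unfold tHphi, tN, tH. set (W := tW p q).
  assert (HW2 : W ^ 2 = 1 + p^2 + q^2).
  { unfold W, tW. rewrite <- Rsqr_pow2. apply Rsqr_sqrt. nra. }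
  assert (HW : 0 < W). { unfold W, tW. apply sqrt_lt_R0. nra. }
  intros E0.
  assert (E1 : (1 + q ^ 2) * A + (1 + p ^ 2) * B - W^2 * (- al*p - be*q + ga) =
     (((1 + q ^ 2) * A + (1 + p ^ 2) * B) / (2 * W ^ 3) -
       / 2 * (al * (- p / W) + be * (- q / W) + ga * (1 / W))) * (2 * W^3)).
  { field. lra. }
  rewrite E0, Rmult_0_l, HW2 in E1. lra.
Qed.

Lemma cubic0 c3 c2 c1 c0 x1 x2 x3 x4 :
  x1 <> x2 -> x1 <> x3 -> x1 <> x4 -> x2 <> x3 -> x2 <> x4 -> x3 <> x4 ->
  c3 * x1^3 + c2 * x1^2 + c1 * x1 + c0 = 0 ->
  c3 * x2^3 + c2 * x2^2 + c1 * x2 + c0 = 0 ->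
  c3 * x3^3 + c2 * x3^2 + c1 * x3 + c0 = 0 ->
  c3 * x4^3 + c2 * x4^2 + c1 * x4 + c0 = 0 ->
  c3 = 0 /\ c2 = 0 /\ c1 = 0 /\ c0 = 0.
Proof.
  intros d12 d13 d14 d23 d24 d34 E1 E2 E3 E4.
  apply Rminus_eq_contra in d12, d13, d14, d23, d24, d34.
  set (P := fun x => c3 * x^3 + c2 * x^2 + c1 * x + c0) in *.
  assert (H3 : c3 = P x1 / ((x1-x2)*(x1-x3)*(x1-x4)) + P x2 / ((x2-x1)*(x2-x3)*(x2-x4))
     + P x3 / ((x3-x1)*(x3-x2)*(x3-x4)) + P x4 / ((x4-x1)*(x4-x2)*(x4-x3))).
  { unfold P. field. repeat split; auto; intro; lra. }
  unfold P in H3; rewrite E1, E2, E3, E4 in H3.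
  assert (c3z : c3 = 0) by (rewrite H3; field; repeat split; auto; intro; lra).
  subst c3.
  set (Q := fun x => c2 * x^2 + c1 * x + c0).
  assert (H2 : c2 = Q x1 / ((x1-x2)*(x1-x3)) + Q x2 / ((x2-x1)*(x2-x3))
     + Q x3 / ((x3-x1)*(x3-x2))).
  { unfold Q. field. repeat split; auto; intro; lra. }
  assert (Q1 : Q x1 = 0) by (unfold Q; lra).
  assert (Q2 : Q x2 = 0) by (unfold Q; lra).
  assert (Q3 : Q x3 = 0) by (unfold Q; lra).
  rewrite Q1, Q2, Q3 in H2.
  assert (c2z : c2 = 0) by (rewrite H2; field; repeat split; auto; intro; lra).
  subst c2.
  assert (c1z : c1 = 0).
  { apply (Rmult_eq_reg_r (x1 - x2)); [|auto]. lra. }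
  subst c1. repeat split; lra.
Qed.

Lemma bnd s l : Rabs (s - l) < Rabs l / 2 -> l*l/2 < s*l < 3*(l*l)/2.
Proof.
  intros H.
  assert (H1 : Rabs ((s - l) * l) < Rabs l * Rabs l / 2).
  { rewrite Rabs_mult. assert (0 <= Rabs l) by apply Rabs_pos.
    destruct (Req_dec (Rabs l) 0) as [E|E].
    - rewrite E in H. pose proof (Rabs_pos (s-l)). lra.
    - nra. }
  assert (E : Rabs l * Rabs l = l * l).
  { rewrite <- Rabs_mult. apply Rabs_right. nra. }
  rewrite E in H1. apply Rabs_def2 in H1. lra.
Qed.

Lemma four_vals (I : R -> Prop) (P : R -> R) x0 l :
  is_open_interval I -> I x0 -> derivable_pt_lim P x0 l -> l <> 0 ->
  exists x1 x2 x3 x4, I x1 /\ I x2 /\ I x3 /\ I x4 /\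
    P x1 <> P x2 /\ P x1 <> P x3 /\ P x1 <> P x4 /\
    P x2 <> P x3 /\ P x2 <> P x4 /\ P x3 <> P x4.
Proof.
  intros [_ [_ Ho]] Hx0 Hd Hl.
  destruct (Ho x0 Hx0) as [e [He HI]].
  assert (Hl2 : 0 < Rabs l / 2) by (pose proof (Rabs_pos_lt l Hl); lra).
  destruct (Hd _ Hl2) as [[d Hdp] Hdd]. simpl in Hdd.
  set (h := Rmin d e / 2).
  assert (Hh : 0 < h) by (unfold h; apply Rmin_case; lra).
  assert (Hh2 : h < d /\ h < e) by (unfold h; split; [pose proof (Rmin_l d e)|pose proof (Rmin_r d e)]; lra).
  assert (G : forall k, 0 < k <= h -> I (x0 + k) /\
     exists s, P (x0 + k) = P x0 + s * k /\ l*l/2 < s*l < 3*(l*l)/2).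
  { intros k Hk. split.
    - apply HI. replace (x0 + k - x0) with k by ring. rewrite Rabs_right; lra.
    - exists ((P (x0 + k) - P x0) / k). split; [field; lra|].
      apply bnd. apply Hdd; [lra|]. rewrite Rabs_right; lra. }
  assert (L2 : 0 < l * l) by nra.
  destruct (G h) as [I1 [s1 [E1 B1]]]; [lra|].
  destruct (G (h/4)) as [I2 [s2 [E2 B2]]]; [lra|].
  destruct (G (h/16)) as [I3 [s3 [E3 B3]]]; [lra|].
  exists x0, (x0+h), (x0+h/4), (x0+h/16).
  rewrite E1, E2, E3.
  repeat split; auto; intro C.
  - assert (s1 * h = 0) by lra. assert (s1 = 0) by nra. subst; nra.
  - assert (s2 * (h/4) = 0) by lra. assert (s2 = 0) by nra. subst; nra.
  - assert (s3 * (h/16) = 0) by lra. assert (s3 = 0) by nra. subst; nra.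
  - assert (s2 = 4 * s1) by nra. subst; nra.
  - assert (s3 = 16 * s1) by nra. subst; nra.
  - assert (s3 = 4 * s2) by nra. subst; nra.
Qed.
Lemma alg (I J : R -> Prop) (p a q b : R -> R) al be ga x1 x2 x3 x4 y1 y2 y3 y4 :
  I x1 -> I x2 -> I x3 -> I x4 ->
  p x1 <> p x2 -> p x1 <> p x3 -> p x1 <> p x4 ->
  p x2 <> p x3 -> p x2 <> p x4 -> p x3 <> p x4 ->
  J y1 -> J y2 -> J y3 -> J y4 ->
  q y1 <> q y2 -> q y1 <> q y3 -> q y1 <> q y4 ->
  q y2 <> q y3 -> q y2 <> q y4 -> q y3 <> q y4 ->
  (forall x y, I x -> J y -> al * p x ^ 3 + be * q y ^ 3 + ga =
     (1 + q y ^ 2) * a x + (1 + p x ^ 2) * b y) ->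
  al = 0 /\ be = 0 /\ ga = 0.
Proof.
  intros I1 I2 I3 I4 d12 d13 d14 d23 d24 d34 J1 J2 J3 J4 e12 e13 e14 e23 e24 e34 Rel.
  assert (Hyy : exists ya yb, J ya /\ J yb /\ q ya ^ 2 - q yb ^ 2 <> 0).
  { destruct (Req_dec (q y1 + q y2) 0) as [E|E].
    - exists y1, y3. repeat split; auto. intro C.
      assert ((q y1 - q y3) * (q y1 + q y3) = 0) by nra.
      apply Rmult_integral in H as [H|H]; [apply e13|apply e23]; lra.
    - exists y1, y2. repeat split; auto. intro C.
      assert ((q y1 - q y2) * (q y1 + q y2) = 0) by nra.
      apply Rmult_integral in H as [H|H]; [apply e12; lra|auto]. }
  destruct Hyy as [ya [yb [Ja [Jb Hd]]]].
  set (lam := - (b ya - b yb) / (q ya ^ 2 - q yb ^ 2)).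
  set (mu := be * (q ya ^ 3 - q yb ^ 3) / (q ya ^ 2 - q yb ^ 2)).
  assert (Ha : forall x, I x -> a x = lam * (1 + p x ^ 2) + mu).
  { intros x Ix. pose proof (Rel x ya Ix Ja) as Ra. pose proof (Rel x yb Ix Jb) as Rb.
    assert (K : (q ya ^ 2 - q yb ^ 2) * a x = be * (q ya ^ 3 - q yb ^ 3) - (1 + p x ^ 2) * (b ya - b yb)) by lra.
    unfold lam, mu. apply (Rmult_eq_reg_l (q ya ^ 2 - q yb ^ 2)); [|auto].
    rewrite K. field. auto. }
  assert (Hy : forall y, J y -> al = 0 /\ be * q y ^ 3 + ga - (1 + q y ^ 2) * mu = 0).
  { intros y Jy.
    assert (F : forall x, I x -> al * p x ^ 3 + (- ((1 + q y ^ 2) * lam + b y)) * p x ^ 2 + 0 * p x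
         + (be * q y ^ 3 + ga - (1 + q y ^ 2) * (lam + mu) - b y) = 0).
    { intros x Ix. pose proof (Rel x y Ix Jy) as R. rewrite (Ha x Ix) in R. lra. }
    destruct (cubic0 _ _ _ _ _ _ _ _ d12 d13 d14 d23 d24 d34 (F x1 I1) (F x2 I2) (F x3 I3) (F x4 I4))
      as [A0 [A1 [_ A3]]].
    split; auto. lra. }
  destruct (Hy y1 J1) as [Hal _].
  assert (G : forall y, J y -> be * q y ^ 3 + (- mu) * q y ^ 2 + 0 * q y + (ga - mu) = 0).
  { intros y Jy. destruct (Hy y Jy) as [_ H]. lra. }
  destruct (cubic0 _ _ _ _ _ _ _ _ e12 e13 e14 e23 e24 e34 (G y1 J1) (G y2 J2) (G y3 J3) (G y4 J4))
    as [B0 [B1 [_ B3]]].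
  repeat split; lra.
Qed.

Lemma affine_of (I : R -> Prop) (f : R -> R) (D : nat -> R -> R) :
  is_open_interval I -> derivatives_on I f D -> (forall x, I x -> D 2%nat x = 0) ->
  affine_on I f.
Proof.
  intros Hi [H0 Hd] H2.
  destruct Hi as [[x0 Hx0] Hrest].
  assert (Hi : is_open_interval I) by (split; [exists x0; auto|auto]).
  assert (C1 : forall x, I x -> D 1%nat x = D 1%nat x0).
  { intros x Ix. apply (const_on I); auto. intros t It. rewrite <- (H2 t It). apply Hd; auto. }
  set (c := D 1%nat x0).
  assert (K : forall x, I x -> D 0%nat x - c * x = D 0%nat x0 - c * x0).
  { intros x Ix. apply (const_on I (fun x => D 0%nat x - c * x)); auto.
    intros t It. replace 0 with (D 1%nat t - c * 1) by (rewrite (C1 t It); unfold c; ring).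
    apply derivable_pt_lim_minus; [apply Hd; auto|].
    apply derivable_pt_lim_scal. apply derivable_pt_lim_id. }
  exists c, (D 0%nat x0 - c * x0). intros x Ix. rewrite <- H0. rewrite <- (K x Ix). ring.
Qed.

Theorem theorem4 (Ix Jy : R -> Prop) (f g : R -> R) (Df Dg : nat -> R -> R)
  (al be ga : R) :
  is_open_interval Ix -> is_open_interval Jy ->
  derivatives_on Ix f Df -> derivatives_on Jy g Dg ->
  ~ (al = 0 /\ be = 0 /\ ga = 0) ->
  phi_minimal_translation al be ga Ix Jy Df Dg ->
  (affine_on Ix f /\ (forall x, Ix x -> Df 2%nat x = 0)) \/
  (affine_on Jy g /\ (forall y, Jy y -> Dg 2%nat y = 0)).
Proof.
  intros HI HJ HDf HDg Hne Hmin.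
  destruct (classic (forall x, Ix x -> Df 2%nat x = 0)) as [Fz|Fnz].
  { left. split; auto. eapply affine_of; eauto. }
  destruct (classic (forall y, Jy y -> Dg 2%nat y = 0)) as [Gz|Gnz].
  { right. split; auto. eapply affine_of; eauto. }
  exfalso. apply Hne.
  apply not_all_ex_not in Fnz as [x0 Fx]. apply imply_to_and in Fx as [Ix0 Fx].
  apply not_all_ex_not in Gnz as [y0 Gy]. apply imply_to_and in Gy as [Jy0 Gy].
  destruct (four_vals Ix (Df 1%nat) x0 (Df 2%nat x0) HI Ix0 (proj2 HDf 1%nat x0 Ix0) Fx)
    as [x1 [x2 [x3 [x4 [I1 [I2 [I3 [I4 [d12 [d13 [d14 [d23 [d24 d34]]]]]]]]]]]]].
  destruct (four_vals Jy (Dg 1%nat) y0 (Dg 2%nat y0) HJ Jy0 (proj2 HDg 1%nat y0 Jy0) Gy)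
    as [y1 [y2 [y3 [y4 [J1 [J2 [J3 [J4 [e12 [e13 [e14 [e23 [e24 e34]]]]]]]]]]]]].
  apply (alg Ix Jy (Df 1%nat) (fun x => ga - al * Df 1%nat x - Df 2%nat x)
           (Dg 1%nat) (fun y => ga - be * Dg 1%nat y - Dg 2%nat y) al be ga
           x1 x2 x3 x4 y1 y2 y3 y4); auto.
  intros x y Ix' Jy'. apply key_rel. apply Hmin; auto.
Qed.
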